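(* Let $\tau>0$, $\varepsilon>0$ and $A\ge\frac1{16}$. Let $\phi^0,\phi^1\in\mathcal C_{\rm per}$ with $\overline{\phi^0}=\overline{\phi^1}=0$, and let $(\phi^k)_{k\ge0}$ be the sequence generated by the scheme below. Let $C_1>0$ be a constant such that $\|\Delta_h\psi\|_2^2\ge C_1\|\psi\|_{H_h^2}^2$ for all $\psi\in\mathcal C_{\rm per}$ with $\overline\psi=0$. Set $C_0=\tilde F_h(\phi^1,\phi^0)$. Then for every $k\ge1$, $$\|\phi^k\|_{H_h^2}\le\sqrt{\frac{2(C_0+|\Omega|)}{C_1\varepsilon^2}}.$$
   Context: Let $L>0$, $N$ a positive integer, $h=L/N$, $\Omega=(0,L)^2$, $|\Omega|=L^2$. $\mathcal C_{\rm per}$ is the space of real grid functions $\phi_{i,j}$ ($i,j\in\mathbb Z$), $N$-periodic in each index, with mean $\overline\phi=\frac{h^2}{L^2}\sum_{i,j=1}^N\phi_{i,j}$. Vertex functions $g_{i+\frac12,j+\frac12}$ are periodic. Norms: $\|\phi\|_p^p=h^2\sum_{i,j=1}^N|\phi_{i,j}|^p$. Standard operators: - $D_x\phi_{i+\frac12,j}=(\phi_{i+1,j}-\phi_{i,j})/h$ and $D_y\phi_{i,j+\frac12}=(\phi_{i,j+1}-\phi_{i,j})/h$. - $\|\nabla_h\phi\|_2^2=h^2\sum_{i,j=1}^N[(D_x\phi_{i+\frac12,j})^2+(D_y\phi_{i,j+\frac12})^2]$. - $\Delta_h\phi_{i,j}=h^{-2}(\phi_{i+1,j}+\phi_{i-1,j}+\phi_{i,j+1}+\phi_{i,j-1}-4\phi_{i,j})$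 and $\Delta_h^2=\Delta_h\Delta_h$. - $\|\phi\|_{H_h^2}^2=\|\phi\|_2^2+\|\nabla_h\phi\|_2^2+\|\Delta_h\phi\|_2^2$. Center-to-vertex differences: - $\mathfrak D_x\phi_{i+\frac12,j+\frac12}=\frac1{2h}(\phi_{i+1,j+1}-\phi_{i,j+1}+\phi_{i+1,j}-\phi_{i,j})$. - $\mathfrak D_y\phi_{i+\frac12,j+\frac12}=\frac1{2h}(\phi_{i+1,j+1}-\phi_{i+1,j}+\phi_{i,j+1}-\phi_{i,j})$. - $|\nabla_h^{\mathsf v}\phi|^2=(\mathfrak D_x\phi)^2+(\mathfrak D_y\phi)^2$ and $\|\nabla_h^{\mathsf v}\phi\|_p^p=h^2\sum_{i,j=1}^N|\nabla_h^{\mathsf v}\phi|^p_{i+\frac12,j+\frac12}$. Vertex-to-center differences: - $\mathfrak d_xg_{i,j}=\frac1{2h}(g_{i+\frac12,j+\frac12}-g_{i-\frac12,j+\frac12}+g_{i+\frac12,j-\frac12}-g_{i-\frac12,j-\frac12})$. - $\mathfrak d_yg_{i,j}=\frac1{2h}(g_{i+\frac12,j+\frac12}-g_{i+\frac12,j-\frac12}+g_{i-\frac12,j+\frac12}-g_{i-\frac12,j-\frac12})$. Skew operators: - $\Delta_h^{\mathsf v}\phi=\mathfrak d_x\mathfrak D_x\phi+\mathfrak d_y\mathfrak D_y\phi$. - $\nabla_h^{\mathsf v}\cdot(|\nabla_h^{\mathsf v}\phi|^2\nabla_h^{\mathsf v}\phi)=\mathfrak d_x(r\mathfrak D_x\phi)+\mathfrak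 d_y(r\mathfrak D_y\phi)$ with $r=|\nabla_h^{\mathsf v}\phi|^2$. Energies: $$F_h(\phi)=\tfrac14\|\nabla_h^{\mathsf v}\phi\|_4^4-\tfrac12\|\nabla_h^{\mathsf v}\phi\|_2^2+\tfrac{\varepsilon^2}2\|\Delta_h\phi\|_2^2,$$ $$\tilde F_h(\phi,\psi)=F_h(\phi)+\tfrac1{4\tau}\|\phi-\psi\|_2^2+\tfrac12\|\nabla_h(\phi-\psi)\|_2^2.$$ Scheme: for $k\ge1$, $\phi^{k+1}\in\mathcal C_{\rm per}$ is the unique solution of $$\frac{3\phi^{k+1}-4\phi^k+\phi^{k-1}}{2\tau}=\nabla_h^{\mathsf v}\cdot(|\nabla_h^{\mathsf v}\phi^{k+1}|^2\nabla_h^{\mathsf v}\phi^{k+1})-\Delta_h^{\mathsf v}(2\phi^k-\phi^{k-1})-A\tau\Delta_h^2(\phi^{k+1}-\phi^k)-\varepsilon^2\Delta_h^2\phi^{k+1}.$$ *)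

(* Defs.v *)
From Stdlib Require Import Reals ZArith Lra.
Open Scope R_scope.

(* Grid functions phi_{i,j}, i,j in Z.  A vertex function
   g_{i+1/2,j+1/2} is represented by g i j. *)
Definition grid := Z -> Z -> R.

Definition periodic (N : nat) (f : grid) : Prop :=
  forall i j : Z, f (i + Z.of_nat N)%Z j = f i j /\ f i (j + Z.of_nat N)%Z = f i j.

Definition gsum (N : nat) (F : Z -> Z -> R) : R :=
  sum_f_R0 (fun a => sum_f_R0 (fun b => F (Z.of_nat a + 1)%Z (Z.of_nat b + 1)%Z) (N - 1)) (N - 1).

Definition mean (L h : R) (N : nat) (f : grid) : R := (h ^ 2 / L ^ 2) * gsum N f.

Definition norm2sq (h : R) (N : nat) (f : grid) : R := h ^ 2 * gsum N (fun i j => (f i j) ^ 2).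

Definition Dx (h : R) (f : grid) : grid := fun i j => (f (i + 1)%Z j - f i j) / h.  (* at (i+1/2, j) *)
Definition Dy (h : R) (f : grid) : grid := fun i j => (f i (j + 1)%Z - f i j) / h.  (* at (i, j+1/2) *)

Definition gradsq (h : R) (N : nat) (f : grid) : R :=
  h ^ 2 * gsum N (fun i j => (Dx h f i j) ^ 2 + (Dy h f i j) ^ 2).

Definition Lap (h : R) (f : grid) : grid := fun i j =>
  (f (i + 1)%Z j + f (i - 1)%Z j + f i (j + 1)%Z + f i (j - 1)%Z - 4 * f i j) / h ^ 2.

Definition Lap2 (h : R) (f : grid) : grid := Lap h (Lap h f).

Definition H2sq (h : R) (N : nat) (f : grid) : R :=
  norm2sq h N f + gradsq h N f + norm2sq h N (Lap h f).
Definition H2norm (h : R) (N : nat) (f : grid) : R := sqrt (H2sq h N f).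

(* center-to-vertex differences; value at vertex (i+1/2, j+1/2) *)
Definition DDx (h : R) (f : grid) : grid := fun i j =>
  (f (i + 1)%Z (j + 1)%Z - f i (j + 1)%Z + f (i + 1)%Z j - f i j) / (2 * h).
Definition DDy (h : R) (f : grid) : grid := fun i j =>
  (f (i + 1)%Z (j + 1)%Z - f (i + 1)%Z j + f i (j + 1)%Z - f i j) / (2 * h).

(* vertex-to-center differences; g i j stands for g_{i+1/2,j+1/2} *)
Definition ddx (h : R) (g : grid) : grid := fun i j =>
  (g i j - g (i - 1)%Z j + g i (j - 1)%Z - g (i - 1)%Z (j - 1)%Z) / (2 * h).
Definition ddy (h : R) (g : grid) : grid := fun i j =>
  (g i j - g i (j - 1)%Z + g (i - 1)%Z j - g (i - 1)%Z (j - 1)%Z) / (2 * h).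

Definition gradv_sq (h : R) (f : grid) : grid := fun i j =>
  (DDx h f i j) ^ 2 + (DDy h f i j) ^ 2.

Definition Lapv (h : R) (f : grid) : grid := fun i j =>
  ddx h (DDx h f) i j + ddy h (DDy h f) i j.

Definition divv (h : R) (f : grid) : grid := fun i j =>
  ddx h (fun a b => gradv_sq h f a b * DDx h f a b) i j
  + ddy h (fun a b => gradv_sq h f a b * DDy h f a b) i j.

Definition gradv4 (h : R) (N : nat) (f : grid) : R :=
  h ^ 2 * gsum N (fun i j => (gradv_sq h f i j) ^ 2).
Definition gradv2 (h : R) (N : nat) (f : grid) : R :=
  h ^ 2 * gsum N (fun i j => gradv_sq h f i j).

Definition Fh (h eps : R) (N : nat) (f : grid) : R :=
  / 4 * gradv4 h N f - / 2 * gradv2 h N f + eps ^ 2 / 2 * norm2sq h N (Lap h f).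

Definition gdiff (f g : grid) : grid := fun i j => f i j - g i j.

Definition Ftilde (h eps tau : R) (N : nat) (f g : grid) : R :=
  Fh h eps N f + / (4 * tau) * norm2sq h N (gdiff f g) + / 2 * gradsq h N (gdiff f g).

Definition scheme_step (h eps tau A : R) (pkp1 pk pkm1 : grid) : Prop :=
  forall i j : Z,
    (3 * pkp1 i j - 4 * pk i j + pkm1 i j) / (2 * tau)
    = divv h pkp1 i j
      - Lapv h (fun a b => 2 * pk a b - pkm1 a b) i j
      - A * tau * Lap2 h (gdiff pkp1 pk) i j
      - eps ^ 2 * Lap2 h pkp1 i j.

(* Main.v *)
From Pilot Require Import Defs.
From Stdlib Require Import Reals ZArith Lra Lia Psatz FunctionalExtensionality.
Import Pilot.Defs.
Open Scope R_scope.

Lemma sum_shift1 (u : nat -> R) n :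
  sum_f_R0 (fun a => u (S a)) n = sum_f_R0 u n - u 0%nat + u (S n).
Proof. induction n; simpl; [ring | rewrite IHn; ring]. Qed.

Lemma s1_shift (N : nat) (g : Z -> R) : (0 < N)%nat ->
  (forall i, g (i + Z.of_nat N)%Z = g i) ->
  sum_f_R0 (fun b => g (Z.of_nat b + 1 + 1)%Z) (N - 1) =
  sum_f_R0 (fun b => g (Z.of_nat b + 1)%Z) (N - 1).
Proof.
  intros HN Hg. destruct N as [|n]; [lia|].
  replace (S n - 1)%nat with n by lia.
  transitivity (sum_f_R0 (fun b => (fun a : nat => g (Z.of_nat a + 1)%Z) (S b)) n).
  { apply sum_eq; intros b _. cbv beta. f_equal. lia. }
  pose proof (sum_shift1 (fun a : nat => g (Z.of_nat a + 1)%Z) n) as E0.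
  cbv beta in E0. rewrite E0.
  assert (E : g (Z.of_nat (S n) + 1)%Z = g (Z.of_nat 0 + 1)%Z).
  { rewrite <- (Hg (Z.of_nat 0 + 1)%Z). f_equal. lia. }
  rewrite E. ring.
Qed.

Lemma gsum_ext N F G : (forall i j, F i j = G i j) -> gsum N F = gsum N G.
Proof. intros H. unfold gsum. apply sum_eq; intros a _. apply sum_eq; intros b _. apply H. Qed.

Lemma gsum_shx1 N F : (0<N)%nat -> periodic N F -> gsum N (fun i j => F (i+1)%Z j) = gsum N F.
Proof.
  intros HN HF. unfold gsum.
  apply (s1_shift N (fun i => sum_f_R0 (fun b => F i (Z.of_nat b + 1)%Z) (N-1))); auto.
  intros i. apply sum_eq; intros b _. apply (proj1 (HF _ _)).
Qed.

Lemma gsum_shy1 N F : (0<N)%nat -> periodic N F -> gsum N (fun i j => F i (j+1)%Z) = gsum N F.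
Proof.
  intros HN HF. unfold gsum. apply sum_eq; intros a _.
  apply (s1_shift N (fun j => F (Z.of_nat a + 1)%Z j)); auto.
  intros j. apply (proj2 (HF _ _)).
Qed.

Lemma per_cst N c : periodic N (fun _ _ => c).
Proof. intros i j; split; reflexivity. Qed.
Lemma per_op2 N (op : R -> R -> R) f g : periodic N f -> periodic N g ->
  periodic N (fun i j => op (f i j) (g i j)).
Proof. intros Hf Hg i j. destruct (Hf i j), (Hg i j). cbv beta. split; congruence. Qed.
Lemma per_op1 N (op : R -> R) f : periodic N f -> periodic N (fun i j => op (f i j)).
Proof. intros Hf i j. destruct (Hf i j). cbv beta. split; congruence. Qed.
Lemma per_pow N f n : periodic N f -> periodic N (fun i j => f i j ^ n).
Proof. intros Hf i j. destruct (Hf i j). cbv beta. split; congruence. Qed.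
Lemma per_map N f p q : periodic N f ->
  (forall i, p (i + Z.of_nat N)%Z = (p i + Z.of_nat N)%Z) ->
  (forall j, q (j + Z.of_nat N)%Z = (q j + Z.of_nat N)%Z) ->
  periodic N (fun i j => f (p i) (q j)).
Proof.
  intros Hf Hp Hq i j. cbv beta. rewrite Hp, Hq.
  split; [apply (proj1 (Hf _ _)) | apply (proj2 (Hf _ _))].
Qed.

Ltac per :=
  unfold Dx, Dy, DDx, DDy, ddx, ddy, Lap, Lap2, gradv_sq, gdiff, divv, Lapv; cbv beta;
  first [ assumption
        | apply per_cst
        | match goal with |- periodic _ (fun _ _ => _) =>
            first [ apply per_op2; per
                  | apply per_op1; per
                  | apply per_pow; per
                  | apply per_map; [per | intros; lia | intros; lia] ] end ].

Lemma gsum_shx N F a : (0<N)%nat -> periodic N F -> gsum N (fun i j => F (i+a)%Z j) = gsum N F.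
Proof.
  intros HN. revert F. induction a using Z.peano_ind; intros F HF.
  - apply gsum_ext; intros; f_equal; lia.
  - assert (HP : periodic N (fun i j => F (i+1)%Z j)) by per.
    transitivity (gsum N (fun i j => F (i+1)%Z j)); [| apply gsum_shx1; auto].
    rewrite <- (IHa _ HP). apply gsum_ext; intros; cbv beta; f_equal; lia.
  - assert (HP : periodic N (fun i j => F (i-1)%Z j)) by per.
    transitivity (gsum N (fun i j => F (i-1)%Z j)).
    + rewrite <- (IHa _ HP). apply gsum_ext; intros; cbv beta; f_equal; lia.
    + rewrite <- (gsum_shx1 N _ HN HP). apply gsum_ext; intros; cbv beta; f_equal; lia.
Qed.

Lemma gsum_shy N F a : (0<N)%nat -> periodic N F -> gsum N (fun i j => F i (j+a)%Z) = gsum N F.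
Proof.
  intros HN. revert F. induction a using Z.peano_ind; intros F HF.
  - apply gsum_ext; intros; f_equal; lia.
  - assert (HP : periodic N (fun i j => F i (j+1)%Z)) by per.
    transitivity (gsum N (fun i j => F i (j+1)%Z)); [| apply gsum_shy1; auto].
    rewrite <- (IHa _ HP). apply gsum_ext; intros; cbv beta; f_equal; lia.
  - assert (HP : periodic N (fun i j => F i (j-1)%Z)) by per.
    transitivity (gsum N (fun i j => F i (j-1)%Z)).
    + rewrite <- (IHa _ HP). apply gsum_ext; intros; cbv beta; f_equal; lia.
    + rewrite <- (gsum_shy1 N _ HN HP). apply gsum_ext; intros; cbv beta; f_equal; lia.
Qed.

Lemma gsum_sh_eq N F G a b : (0<N)%nat -> periodic N F ->
  (forall i j, G i j = F (i+a)%Z (j+b)%Z) -> gsum N G = gsum N F.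
Proof.
  intros HN HF H.
  assert (HP : periodic N (fun i j => F i (j+b)%Z)) by per.
  transitivity (gsum N (fun i j => F i (j+b)%Z)).
  - rewrite <- (gsum_shx N _ a HN HP). apply gsum_ext; intros; apply H.
  - apply gsum_shy; auto.
Qed.

Lemma gsum_add N F G : gsum N (fun i j => F i j + G i j) = gsum N (fun i j => F i j) + gsum N (fun i j => G i j).
Proof. unfold gsum. rewrite <- sum_plus. apply sum_eq; intros. apply sum_plus. Qed.
Lemma gsum_scal N c F : gsum N (fun i j => c * F i j) = c * gsum N (fun i j => F i j).
Proof. unfold gsum. rewrite scal_sum. apply sum_eq; intros. rewrite Rmult_comm, scal_sum. apply sum_eq; intros. ring. Qed.
Lemma gsum_sub N F G : gsum N (fun i j => F i j - G i j) = gsum N (fun i j => F i j) - gsum N (fun i j => G i j).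
Proof.
  transitivity (gsum N (fun i j => F i j + (-1) * G i j)).
  - apply gsum_ext; intros; ring.
  - rewrite gsum_add, gsum_scal. ring.
Qed.
Lemma gsum_opp N F : gsum N (fun i j => - F i j) = - gsum N (fun i j => F i j).
Proof.
  transitivity (gsum N (fun i j => (-1) * F i j)).
  - apply gsum_ext; intros; ring.
  - rewrite gsum_scal. ring.
Qed.
Lemma gsum_le N F G : (forall i j, F i j <= G i j) -> gsum N F <= gsum N G.
Proof. intros H. unfold gsum. apply sum_Rle; intros. apply sum_Rle; intros. apply H. Qed.
Lemma gsum_cst N c : (0<N)%nat -> gsum N (fun _ _ => c) = INR N * INR N * c.
Proof.
  intros HN. unfold gsum. rewrite sum_cte. rewrite sum_cte.
  replace (S (N-1)) with N by lia. ring.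
Qed.

Ltac zsh := intros; cbv beta; f_equal; f_equal; lia.
Ltac lin := repeat rewrite ?gsum_scal, ?gsum_sub, ?gsum_add, ?gsum_opp; cbv beta.
Ltac linH H := repeat rewrite ?gsum_scal, ?gsum_sub, ?gsum_add, ?gsum_opp in H; cbv beta in H.

Lemma sbp_x N h g f : (0<N)%nat -> h <> 0 -> periodic N g -> periodic N f ->
  gsum N (fun i j => ddx h g i j * f i j) = - gsum N (fun i j => g i j * DDx h f i j).
Proof.
  intros HN Hh Hg Hf.
  assert (E1 : gsum N (fun i j => g (i-1)%Z j * f i j) = gsum N (fun i j => g i j * f (i+1)%Z j)).
  { apply (gsum_sh_eq N (fun i j => g i j * f (i+1)%Z j) _ (-1) 0 HN); [per | zsh]. }
  assert (E2 : gsum N (fun i j => g i (j-1)%Z * f i j) = gsum N (fun i j => g i j * f i (j+1)%Z)).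
  { apply (gsum_sh_eq N (fun i j => g i j * f i (j+1)%Z) _ 0 (-1) HN); [per | zsh]. }
  assert (E3 : gsum N (fun i j => g (i-1)%Z (j-1)%Z * f i j) = gsum N (fun i j => g i j * f (i+1)%Z (j+1)%Z)).
  { apply (gsum_sh_eq N (fun i j => g i j * f (i+1)%Z (j+1)%Z) _ (-1) (-1) HN); [per | zsh]. }
  rewrite (gsum_ext N _ (fun i j => /(2*h) * (g i j * f i j - g (i-1)%Z j * f i j + g i (j-1)%Z * f i j - g (i-1)%Z (j-1)%Z * f i j)))
    by (intros; unfold ddx; field; auto).
  rewrite (gsum_ext N (fun i j => g i j * DDx h f i j) (fun i j => /(2*h) * (g i j * f (i+1)%Z (j+1)%Z - g i j * f i (j+1)%Z + g i j * f (i+1)%Z j - g i j * f i j)))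
    by (intros; unfold DDx; field; auto).
  lin. rewrite E1, E2, E3. ring.
Qed.

Lemma sbp_y N h g f : (0<N)%nat -> h <> 0 -> periodic N g -> periodic N f ->
  gsum N (fun i j => ddy h g i j * f i j) = - gsum N (fun i j => g i j * DDy h f i j).
Proof.
  intros HN Hh Hg Hf.
  assert (E1 : gsum N (fun i j => g (i-1)%Z j * f i j) = gsum N (fun i j => g i j * f (i+1)%Z j)).
  { apply (gsum_sh_eq N (fun i j => g i j * f (i+1)%Z j) _ (-1) 0 HN); [per | zsh]. }
  assert (E2 : gsum N (fun i j => g i (j-1)%Z * f i j) = gsum N (fun i j => g i j * f i (j+1)%Z)).
  { apply (gsum_sh_eq N (fun i j => g i j * f i (j+1)%Z) _ 0 (-1) HN); [per | zsh]. }
  assert (E3 : gsum N (fun i j => g (i-1)%Z (j-1)%Z * f i j) = gsum N (fun i j => g i j * f (i+1)%Z (j+1)%Z)).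
  { apply (gsum_sh_eq N (fun i j => g i j * f (i+1)%Z (j+1)%Z) _ (-1) (-1) HN); [per | zsh]. }
  rewrite (gsum_ext N _ (fun i j => /(2*h) * (g i j * f i j - g i (j-1)%Z * f i j + g (i-1)%Z j * f i j - g (i-1)%Z (j-1)%Z * f i j)))
    by (intros; unfold ddy; field; auto).
  rewrite (gsum_ext N (fun i j => g i j * DDy h f i j) (fun i j => /(2*h) * (g i j * f (i+1)%Z (j+1)%Z - g i j * f (i+1)%Z j + g i j * f i (j+1)%Z - g i j * f i j)))
    by (intros; unfold DDy; field; auto).
  lin. rewrite E1, E2, E3. ring.
Qed.

Lemma Lap_sym N h F G : (0<N)%nat -> h <> 0 -> periodic N F -> periodic N G ->
  gsum N (fun i j => Lap h F i j * G i j) = gsum N (fun i j => F i j * Lap h G i j).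
Proof.
  intros HN Hh HF HG.
  assert (E1 : gsum N (fun i j => F (i+1)%Z j * G i j) = gsum N (fun i j => F i j * G (i-1)%Z j)).
  { apply (gsum_sh_eq N (fun i j => F i j * G (i-1)%Z j) _ 1 0 HN); [per | zsh]. }
  assert (E2 : gsum N (fun i j => F (i-1)%Z j * G i j) = gsum N (fun i j => F i j * G (i+1)%Z j)).
  { apply (gsum_sh_eq N (fun i j => F i j * G (i+1)%Z j) _ (-1) 0 HN); [per | zsh]. }
  assert (E3 : gsum N (fun i j => F i (j+1)%Z * G i j) = gsum N (fun i j => F i j * G i (j-1)%Z)).
  { apply (gsum_sh_eq N (fun i j => F i j * G i (j-1)%Z) _ 0 1 HN); [per | zsh]. }
  assert (E4 : gsum N (fun i j => F i (j-1)%Z * G i j) = gsum N (fun i j => F i j * G i (j+1)%Z)).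
  { apply (gsum_sh_eq N (fun i j => F i j * G i (j+1)%Z) _ 0 (-1) HN); [per | zsh]. }
  rewrite (gsum_ext N _ (fun i j => /(h^2) * (F (i+1)%Z j * G i j + F (i-1)%Z j * G i j + F i (j+1)%Z * G i j + F i (j-1)%Z * G i j - 4 * (F i j * G i j))))
    by (intros; unfold Lap; field; auto).
  rewrite (gsum_ext N (fun i j => F i j * Lap h G i j) (fun i j => /(h^2) * (F i j * G (i+1)%Z j + F i j * G (i-1)%Z j + F i j * G i (j+1)%Z + F i j * G i (j-1)%Z - 4 * (F i j * G i j))))
    by (intros; unfold Lap; field; auto).
  lin. rewrite E1, E2, E3, E4. ring.
Qed.

Lemma Lap_grad N h F G : (0<N)%nat -> h <> 0 -> periodic N F -> periodic N G ->
  gsum N (fun i j => Lap h F i j * G i j) =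
  - gsum N (fun i j => Dx h F i j * Dx h G i j + Dy h F i j * Dy h G i j).
Proof.
  intros HN Hh HF HG.
  assert (K1 : gsum N (fun i j => F (i+1)%Z j * G (i+1)%Z j) = gsum N (fun i j => F i j * G i j)).
  { apply (gsum_sh_eq N (fun i j => F i j * G i j) _ 1 0 HN); [per | zsh]. }
  assert (K2 : gsum N (fun i j => F i j * G (i+1)%Z j) = gsum N (fun i j => F (i-1)%Z j * G i j)).
  { apply (gsum_sh_eq N (fun i j => F (i-1)%Z j * G i j) _ 1 0 HN); [per | zsh]. }
  assert (K3 : gsum N (fun i j => F i (j+1)%Z * G i (j+1)%Z) = gsum N (fun i j => F i j * G i j)).
  { apply (gsum_sh_eq N (fun i j => F i j * G i j) _ 0 1 HN); [per | zsh]. }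
  assert (K4 : gsum N (fun i j => F i j * G i (j+1)%Z) = gsum N (fun i j => F i (j-1)%Z * G i j)).
  { apply (gsum_sh_eq N (fun i j => F i (j-1)%Z * G i j) _ 0 1 HN); [per | zsh]. }
  rewrite (gsum_ext N _ (fun i j => /(h^2) * (F (i+1)%Z j * G i j + F (i-1)%Z j * G i j + F i (j+1)%Z * G i j + F i (j-1)%Z * G i j - 4 * (F i j * G i j))))
    by (intros; unfold Lap; field; auto).
  rewrite (gsum_ext N (fun i j => Dx h F i j * Dx h G i j + Dy h F i j * Dy h G i j)
     (fun i j => /(h^2) * (F (i+1)%Z j * G (i+1)%Z j - F (i+1)%Z j * G i j - F i j * G (i+1)%Z j + F i j * G i j
                  + (F i (j+1)%Z * G i (j+1)%Z - F i (j+1)%Z * G i j - F i j * G i (j+1)%Z + F i j * G i j))))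
    by (intros; unfold Dx, Dy; field; auto).
  lin. rewrite K1, K2, K3, K4. ring.
Qed.

Lemma gv_bound N h f : (0<N)%nat -> h <> 0 -> periodic N f ->
  gsum N (fun i j => gradv_sq h f i j) <= gsum N (fun i j => Dx h f i j ^ 2 + Dy h f i j ^ 2).
Proof.
  intros HN Hh Hf.
  assert (E1 : gsum N (fun i j => Dx h f i (j+1)%Z ^ 2) = gsum N (fun i j => Dx h f i j ^ 2)).
  { apply (gsum_sh_eq N (fun i j => Dx h f i j ^ 2) _ 0 1 HN); [per | intros; cbv beta; f_equal; unfold Dx; repeat f_equal; lia]. }
  assert (E2 : gsum N (fun i j => Dy h f (i+1)%Z j ^ 2) = gsum N (fun i j => Dy h f i j ^ 2)).
  { apply (gsum_sh_eq N (fun i j => Dy h f i j ^ 2) _ 1 0 HN); [per | intros; cbv beta; f_equal; unfold Dy; repeat f_equal; lia]. }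
  eapply Rle_trans.
  - apply (gsum_le N _ (fun i j => /2 * Dx h f i (j+1)%Z ^ 2 + /2 * Dx h f i j ^ 2 + (/2 * Dy h f (i+1)%Z j ^ 2 + /2 * Dy h f i j ^ 2))).
    intros i j. unfold gradv_sq.
    replace (DDx h f i j) with ((Dx h f i (j+1)%Z + Dx h f i j)/2) by (unfold DDx, Dx; field; auto).
    replace (DDy h f i j) with ((Dy h f (i+1)%Z j + Dy h f i j)/2) by (unfold DDy, Dy; field; auto).
    set (a1 := Dx h f i (j+1)%Z). set (a2 := Dx h f i j). set (b1 := Dy h f (i+1)%Z j). set (b2 := Dy h f i j).
    assert (0 <= (a1 - a2)^2) by apply pow2_ge_0. assert (0 <= (b1 - b2)^2) by apply pow2_ge_0.
    nra.
  - lin. rewrite E1, E2. lra.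
Qed.

Lemma sum_ddx0 N h g : (0<N)%nat -> h <> 0 -> periodic N g -> gsum N (fun i j => ddx h g i j) = 0.
Proof.
  intros HN Hh Hg.
  transitivity (gsum N (fun i j => ddx h g i j * (fun _ _ => 1) i j)).
  { apply gsum_ext; intros; cbv beta; ring. }
  rewrite sbp_x; auto; [| apply per_cst].
  rewrite (gsum_ext N _ (fun _ _ => 0)) by (intros; unfold DDx; field; auto).
  rewrite gsum_cst; auto. ring.
Qed.

Lemma sum_ddy0 N h g : (0<N)%nat -> h <> 0 -> periodic N g -> gsum N (fun i j => ddy h g i j) = 0.
Proof.
  intros HN Hh Hg.
  transitivity (gsum N (fun i j => ddy h g i j * (fun _ _ => 1) i j)).
  { apply gsum_ext; intros; cbv beta; ring. }
  rewrite sbp_y; auto; [| apply per_cst].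
  rewrite (gsum_ext N _ (fun _ _ => 0)) by (intros; unfold DDy; field; auto).
  rewrite gsum_cst; auto. ring.
Qed.

Lemma sum_Lap0 N h g : (0<N)%nat -> h <> 0 -> periodic N g -> gsum N (fun i j => Lap h g i j) = 0.
Proof.
  intros HN Hh Hg.
  transitivity (gsum N (fun i j => Lap h g i j * (fun _ _ => 1) i j)).
  { apply gsum_ext; intros; cbv beta; ring. }
  rewrite Lap_sym; auto; [| apply per_cst].
  rewrite (gsum_ext N _ (fun _ _ => 0)) by (intros; unfold Lap; field; auto).
  rewrite gsum_cst; auto. ring.
Qed.


Lemma pt1 tau x y z : 0 < tau ->
  5/4 * /tau * ((x - y)^2) - /4 * /tau * ((y - z)^2) <= (3*x - 4*y + z)/(2*tau) * (x - y).
Proof.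
  intros Ht. assert (0 < /tau) by (apply Rinv_0_lt_compat; lra).
  assert (0 <= /tau * (x - 2*y + z)^2) by (apply Rmult_le_pos; [lra | apply pow2_ge_0]).
  unfold Rdiv. rewrite Rinv_mult. nra.
Qed.

Lemma quart x1 y1 x2 y2 :
  - ((x1^2 + y1^2) * x1 * (x1 - x2)) - (x1^2 + y1^2) * y1 * (y1 - y2)
  <= /4 * (x2^2 + y2^2)^2 - /4 * (x1^2 + y1^2)^2.
Proof.
  assert (H1 : 0 <= (x1^2 + y1^2) * ((x1 - x2)^2 + (y1 - y2)^2)).
  { apply Rmult_le_pos; apply Rplus_le_le_0_compat; apply pow2_ge_0. }
  assert (H2 : 0 <= ((x1^2+y1^2) - (x2^2+y2^2))^2) by apply pow2_ge_0.
  nra.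
Qed.

Lemma pt3 xa ya xb yb xc yc :
  (2*xb - xc)*(xa - xb) + (2*yb - yc)*(ya - yb)
  <= /2*(xa^2 + ya^2) - /2*(xb^2 + yb^2) + /2*((xb - xc)^2 + (yb - yc)^2).
Proof.
  assert (0 <= ((xa - xb) - (xb - xc))^2) by apply pow2_ge_0.
  assert (0 <= ((ya - yb) - (yb - yc))^2) by apply pow2_ge_0.
  nra.
Qed.

Lemma pt4 tau A x L : 0 < tau -> /16 <= A -> 0 <= 2 * /tau * x^2 + 2*A*tau * L^2 + L * x.
Proof.
  intros Ht HA.
  assert (E : 2 * /tau * x^2 + 2*A*tau * L^2 + L * x =
              /tau * (2*(x + tau*L/4)^2 + (2*A - /8)*(tau*L)^2)) by (field; lra).
  rewrite E. apply Rmult_le_pos; [left; apply Rinv_0_lt_compat; lra|].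
  assert (0 <= (x + tau*L/4)^2) by apply pow2_ge_0.
  assert (0 <= (tau*L)^2) by apply pow2_ge_0.
  nra.
Qed.

Lemma DDx_gd h f g i j : h <> 0 -> DDx h (gdiff f g) i j = DDx h f i j - DDx h g i j.
Proof. intros; unfold DDx, gdiff; field; auto. Qed.
Lemma DDy_gd h f g i j : h <> 0 -> DDy h (gdiff f g) i j = DDy h f i j - DDy h g i j.
Proof. intros; unfold DDy, gdiff; field; auto. Qed.
Lemma DDx_w h f g i j : h <> 0 -> DDx h (fun p q => 2 * f p q - g p q) i j = 2 * DDx h f i j - DDx h g i j.
Proof. intros; unfold DDx; field; auto. Qed.
Lemma DDy_w h f g i j : h <> 0 -> DDy h (fun p q => 2 * f p q - g p q) i j = 2 * DDy h f i j - DDy h g i j.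
Proof. intros; unfold DDy; field; auto. Qed.
Lemma Lap_gd h f g i j : h <> 0 -> Lap h (gdiff f g) i j = Lap h f i j - Lap h g i j.
Proof. intros; unfold Lap, gdiff; field; auto. Qed.

Lemma energy_step N h eps tau A a b c : (0<N)%nat -> h <> 0 -> 0 < tau -> /16 <= A ->
  periodic N a -> periodic N b -> periodic N c -> scheme_step h eps tau A a b c ->
  Ftilde h eps tau N a b <= Ftilde h eps tau N b c.
Proof.
  intros HN Hh Ht HA Pa Pb Pc Hs.
  assert (Pd : periodic N (gdiff a b)) by per.
  assert (Pe : periodic N (gdiff b c)) by per.
  assert (F0 : gsum N (fun i j => (3 * a i j - 4 * b i j + c i j) / (2 * tau) * gdiff a b i j) =
    gsum N (fun i j => divv h a i j * gdiff a b i j)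
    - gsum N (fun i j => Lapv h (fun p q => 2 * b p q - c p q) i j * gdiff a b i j)
    - A * tau * gsum N (fun i j => Lap2 h (gdiff a b) i j * gdiff a b i j)
    - eps^2 * gsum N (fun i j => Lap2 h a i j * gdiff a b i j)).
  { rewrite (gsum_ext N _ (fun i j => divv h a i j * gdiff a b i j
       - Lapv h (fun p q => 2 * b p q - c p q) i j * gdiff a b i j
       - A * tau * (Lap2 h (gdiff a b) i j * gdiff a b i j)
       - eps^2 * (Lap2 h a i j * gdiff a b i j))).
    - lin. reflexivity.
    - intros i j. rewrite Hs. ring. }
  assert (Q1 : 5/4 * /tau * gsum N (fun i j => gdiff a b i j ^ 2) - /4 * /tau * gsum N (fun i j => gdiff b c i j ^ 2)
     <= gsum N (fun i j => (3 * a i j - 4 * b i j + c i j) / (2 * tau) * gdiff a b i j)).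
  { rewrite <- (gsum_scal N (5/4 * /tau)), <- (gsum_scal N (/4 * /tau)), <- gsum_sub.
    apply gsum_le; intros; cbv beta; unfold gdiff; apply pt1; auto. }
  assert (Q2 : gsum N (fun i j => divv h a i j * gdiff a b i j)
      <= /4 * gsum N (fun i j => gradv_sq h b i j ^ 2) - /4 * gsum N (fun i j => gradv_sq h a i j ^ 2)).
  { rewrite (gsum_ext N _ (fun i j => ddx h (fun p q => gradv_sq h a p q * DDx h a p q) i j * gdiff a b i j
         + ddy h (fun p q => gradv_sq h a p q * DDy h a p q) i j * gdiff a b i j)) by (intros; unfold divv; ring).
    rewrite gsum_add, sbp_x, sbp_y; auto; try per.
    assert (HH : gsum N (fun i j => - (gradv_sq h a i j * DDx h a i j * DDx h (gdiff a b) i j)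
                    - gradv_sq h a i j * DDy h a i j * DDy h (gdiff a b) i j)
               <= gsum N (fun i j => /4 * gradv_sq h b i j ^ 2 - /4 * gradv_sq h a i j ^ 2)).
    { apply gsum_le; intros i j. rewrite DDx_gd, DDy_gd by auto. unfold gradv_sq.
      pose proof (quart (DDx h a i j) (DDy h a i j) (DDx h b i j) (DDy h b i j)). lra. }
    linH HH. cbv beta. lra. }
  assert (Q3 : - gsum N (fun i j => Lapv h (fun p q => 2 * b p q - c p q) i j * gdiff a b i j)
      <= /2 * gsum N (fun i j => gradv_sq h a i j) - /2 * gsum N (fun i j => gradv_sq h b i j)
         + /2 * gsum N (fun i j => gradv_sq h (gdiff b c) i j)).
  { rewrite (gsum_ext N _ (fun i j => ddx h (DDx h (fun p q => 2 * b p q - c p q)) i j * gdiff a b i j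
         + ddy h (DDy h (fun p q => 2 * b p q - c p q)) i j * gdiff a b i j)) by (intros; unfold Lapv; ring).
    rewrite gsum_add, sbp_x, sbp_y; auto; try per.
    assert (HH : gsum N (fun i j => DDx h (fun p q => 2 * b p q - c p q) i j * DDx h (gdiff a b) i j
                    + DDy h (fun p q => 2 * b p q - c p q) i j * DDy h (gdiff a b) i j)
      <= gsum N (fun i j => /2 * gradv_sq h a i j - /2 * gradv_sq h b i j + /2 * gradv_sq h (gdiff b c) i j)).
    { apply gsum_le; intros i j. unfold gradv_sq.
      rewrite !DDx_gd, !DDy_gd, DDx_w, DDy_w by auto.
      apply pt3. }
    linH HH. cbv beta. lra. }
  assert (Q4 : gsum N (fun i j => Lap2 h (gdiff a b) i j * gdiff a b i j) = gsum N (fun i j => Lap h (gdiff a b) i j ^ 2)).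
  { unfold Lap2. rewrite Lap_sym; auto; try per. apply gsum_ext; intros; ring. }
  assert (Q5 : /2 * gsum N (fun i j => Lap h a i j ^ 2) - /2 * gsum N (fun i j => Lap h b i j ^ 2)
     <= gsum N (fun i j => Lap2 h a i j * gdiff a b i j)).
  { unfold Lap2. rewrite Lap_sym; auto; try per.
    rewrite <- (gsum_scal N (/2) (fun i j => Lap h a i j ^ 2)), <- (gsum_scal N (/2) (fun i j => Lap h b i j ^ 2)), <- gsum_sub.
    apply gsum_le; intros i j; cbv beta. rewrite Lap_gd by auto.
    pose proof (pow2_ge_0 (Lap h a i j - Lap h b i j)). nra. }
  assert (Gd : gsum N (fun i j => Dx h (gdiff a b) i j ^ 2 + Dy h (gdiff a b) i j ^ 2)
             = - gsum N (fun i j => Lap h (gdiff a b) i j * gdiff a b i j)).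
  { rewrite Lap_grad; auto. rewrite Ropp_involutive. apply gsum_ext; intros; ring. }
  assert (P4 : 0 <= 2 * /tau * gsum N (fun i j => gdiff a b i j ^ 2)
      + 2*A*tau * gsum N (fun i j => Lap h (gdiff a b) i j ^ 2)
      + gsum N (fun i j => Lap h (gdiff a b) i j * gdiff a b i j)).
  { apply Rle_trans with (gsum N (fun _ _ => 0)).
    { rewrite gsum_cst; auto. rewrite Rmult_0_r. lra. }
    rewrite <- (gsum_scal N (2 * /tau)), <- (gsum_scal N (2*A*tau)), <- !gsum_add.
    apply gsum_le; intros i j; cbv beta. apply pt4; auto. }
  pose proof (gv_bound N h (gdiff b c) HN Hh Pe) as Ge.
  assert (Q5' : eps^2 * (/2 * gsum N (fun i j => Lap h a i j ^ 2) - /2 * gsum N (fun i j => Lap h b i j ^ 2))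
     <= eps^2 * gsum N (fun i j => Lap2 h a i j * gdiff a b i j)).
  { apply Rmult_le_compat_l; [apply pow2_ge_0 | exact Q5]. }
  assert (I : /4 * gsum N (fun i j => gradv_sq h a i j ^ 2) - /2 * gsum N (fun i j => gradv_sq h a i j)
      + eps^2/2 * gsum N (fun i j => Lap h a i j ^ 2) + /4 * /tau * gsum N (fun i j => gdiff a b i j ^ 2)
      + /2 * gsum N (fun i j => Dx h (gdiff a b) i j ^ 2 + Dy h (gdiff a b) i j ^ 2)
      <= /4 * gsum N (fun i j => gradv_sq h b i j ^ 2) - /2 * gsum N (fun i j => gradv_sq h b i j)
      + eps^2/2 * gsum N (fun i j => Lap h b i j ^ 2) + /4 * /tau * gsum N (fun i j => gdiff b c i j ^ 2)
      + /2 * gsum N (fun i j => Dx h (gdiff b c) i j ^ 2 + Dy h (gdiff b c) i j ^ 2)).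
  { rewrite Q4 in F0. lra. }
  unfold Ftilde, Fh, gradv4, gradv2, norm2sq, gradsq.
  rewrite !Rinv_mult.
  assert (Hh2 : 0 < h^2) by (replace (h^2) with (Rsqr h) by (unfold Rsqr; ring); apply Rsqr_pos_lt; auto).
  match type of I with ?X <= ?Y =>
    assert (0 <= h^2 * (Y - X)) by (apply Rmult_le_pos; lra) end.
  lra.
Qed.


Lemma sum_scheme N h eps tau A a b c : (0<N)%nat -> h <> 0 -> 0 < tau ->
  periodic N a -> periodic N b -> periodic N c -> scheme_step h eps tau A a b c ->
  3 * gsum N a - 4 * gsum N b + gsum N c = 0.
Proof.
  intros HN Hh Ht Pa Pb Pc Hs.
  assert (E : gsum N (fun i j => (3 * a i j - 4 * b i j + c i j) / (2 * tau)) = 0).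
  { rewrite (gsum_ext N _ (fun i j => (ddx h (fun p q => gradv_sq h a p q * DDx h a p q) i j
                                   + ddy h (fun p q => gradv_sq h a p q * DDy h a p q) i j)
        - (ddx h (DDx h (fun p q => 2 * b p q - c p q)) i j + ddy h (DDy h (fun p q => 2 * b p q - c p q)) i j)
        - A * tau * Lap h (Lap h (gdiff a b)) i j - eps^2 * Lap h (Lap h a) i j))
      by (intros; rewrite Hs; unfold divv, Lapv, Lap2; ring).
    lin.
    rewrite (sum_ddx0 N h (fun p q => gradv_sq h a p q * DDx h a p q)) by first [assumption | per].
    rewrite (sum_ddy0 N h (fun p q => gradv_sq h a p q * DDy h a p q)) by first [assumption | per].
    rewrite (sum_ddx0 N h (DDx h (fun p q => 2 * b p q - c p q))) by first [assumption | per].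
    rewrite (sum_ddy0 N h (DDy h (fun p q => 2 * b p q - c p q))) by first [assumption | per].
    rewrite (sum_Lap0 N h (Lap h (gdiff a b))) by first [assumption | per].
    rewrite (sum_Lap0 N h (Lap h a)) by first [assumption | per].
    ring. }
  rewrite (gsum_ext N _ (fun i j => /(2*tau) * (3 * a i j - 4 * b i j + c i j))) in E
    by (intros; field; lra).
  linH E.
  change (gsum N a) with (gsum N (fun i j => a i j)).
  change (gsum N b) with (gsum N (fun i j => b i j)).
  change (gsum N c) with (gsum N (fun i j => c i j)).
  apply Rmult_integral in E. destruct E as [E|E]; [|exact E].
  exfalso. apply (Rinv_neq_0_compat (2*tau)); [lra | exact E].
Qed.

Lemma F_lower N h eps tau f g : (0<N)%nat -> 0 < tau ->
  eps^2/2 * norm2sq h N (Lap h f) - h^2 * (INR N * INR N) / 4 <= Ftilde h eps tau N f g.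
Proof.
  intros HN Ht.
  unfold Ftilde, Fh, gradv4, gradv2, norm2sq, gradsq.
  assert (A1 : gsum N (fun _ _ => -/4) <= gsum N (fun i j => /4 * gradv_sq h f i j ^ 2 - /2 * gradv_sq h f i j)).
  { apply gsum_le; intros. pose proof (pow2_ge_0 (gradv_sq h f i j - 1)). nra. }
  rewrite gsum_cst in A1 by auto. linH A1.
  assert (A2 : gsum N (fun _ _ => 0) <= gsum N (fun i j => gdiff f g i j ^ 2)).
  { apply gsum_le; intros; apply pow2_ge_0. }
  assert (A3 : gsum N (fun _ _ => 0) <= gsum N (fun i j => Dx h (gdiff f g) i j ^ 2 + Dy h (gdiff f g) i j ^ 2)).
  { apply gsum_le; intros. apply Rplus_le_le_0_compat; apply pow2_ge_0. }
  rewrite gsum_cst in A2, A3 by auto. rewrite Rmult_0_r in A2, A3.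
  assert (Hh : 0 <= h^2) by apply pow2_ge_0.
  assert (B1 : 0 <= h^2 * (/4 * gsum N (fun i j => gradv_sq h f i j ^ 2) - /2 * gsum N (fun i j => gradv_sq h f i j)
                 - INR N * INR N * - / 4)) by (apply Rmult_le_pos; lra).
  assert (B2 : 0 <= / (4 * tau) * (h^2 * gsum N (fun i j => gdiff f g i j ^ 2))).
  { apply Rmult_le_pos; [left; apply Rinv_0_lt_compat; lra | apply Rmult_le_pos; lra]. }
  assert (B3 : 0 <= h^2 * gsum N (fun i j => Dx h (gdiff f g) i j ^ 2 + Dy h (gdiff f g) i j ^ 2))
    by (apply Rmult_le_pos; lra).
  lra.
Qed.

Theorem mainTheorem8
  (L : R) (N : nat) (tau eps A C1 : R) (phi : nat -> grid)
  (HL : 0 < L) (HN : (0 < N)%nat)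
  (Htau : 0 < tau) (Heps : 0 < eps) (HA : / 16 <= A)
  (Hper : forall k, periodic N (phi k))
  (Hm0 : mean L (L / INR N) N (phi 0%nat) = 0)
  (Hm1 : mean L (L / INR N) N (phi 1%nat) = 0)
  (Hscheme : forall k, (1 <= k)%nat ->
     scheme_step (L / INR N) eps tau A (phi (S k)) (phi k) (phi (k - 1)%nat))
  (HC1 : 0 < C1)
  (HC1bound : forall psi : grid, periodic N psi -> mean L (L / INR N) N psi = 0 ->
     norm2sq (L / INR N) N (Lap (L / INR N) psi) >= C1 * H2sq (L / INR N) N psi) :
  forall k, (1 <= k)%nat ->
    H2norm (L / INR N) N (phi k)
    <= sqrt (2 * (Ftilde (L / INR N) eps tau N (phi 1%nat) (phi 0%nat) + L ^ 2) / (C1 * eps ^ 2)).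
Proof.
  intros k Hk.
  assert (HNr : 0 < INR N) by (apply lt_0_INR; lia).
  set (h := L / INR N) in *.
  assert (Hhp : 0 < h) by (unfold h; apply Rdiv_lt_0_compat; lra).
  assert (Hh : h <> 0) by lra.
  assert (HhN : h^2 * (INR N * INR N) = L^2) by (unfold h; field; lra).
  assert (Hc : 0 < h^2 / L^2) by (apply Rdiv_lt_0_compat; apply pow_lt; lra).
  assert (Hsum : forall k, gsum N (phi k) = 0 /\ gsum N (phi (S k)) = 0).
  { induction k0.
    - unfold mean in Hm0, Hm1. split.
      + apply Rmult_integral in Hm0. destruct Hm0; [lra | auto].
      + apply Rmult_integral in Hm1. destruct Hm1; [lra | auto].
    - destruct IHk0 as [I1 I2]. split; auto.
      pose proof (sum_scheme N h eps tau A _ _ _ HN Hh Htau (Hper _) (Hper _) (Hper _) (Hscheme (S k0) ltac:(lia))) as E.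
      replace (S k0 - 1)%nat with k0 in E by lia. lra. }
  assert (Hen : forall k, (1 <= k)%nat ->
     Ftilde h eps tau N (phi k) (phi (k - 1)%nat) <= Ftilde h eps tau N (phi 1%nat) (phi 0%nat)).
  { induction k0; intros Hk0; [lia|].
    destruct (Nat.eq_dec k0 0) as [->|Hne].
    - replace (1 - 1)%nat with 0%nat by lia. apply Rle_refl.
    - eapply Rle_trans; [| apply IHk0; lia].
      replace (S k0 - 1)%nat with k0 by lia.
      apply (energy_step N h eps tau A); auto. apply Hscheme; lia. }
  pose proof (Hen k Hk) as E1.
  pose proof (F_lower N h eps tau (phi k) (phi (k-1)%nat) HN Htau) as E2.
  assert (Hmk : mean L h N (phi k) = 0) by (unfold mean; rewrite (proj1 (Hsum k)); ring).
  pose proof (HC1bound (phi k) (Hper k) Hmk) as E3.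
  set (C0 := Ftilde h eps tau N (phi 1%nat) (phi 0%nat)) in *.
  set (NL := norm2sq h N (Lap h (phi k))) in *.
  set (Hs := H2sq h N (phi k)) in *.
  rewrite HhN in E2.
  assert (E4 : eps^2 * (C1 * Hs) <= eps^2 * NL) by (apply Rmult_le_compat_l; [apply pow2_ge_0 | lra]).
  assert (HL2 : 0 <= L^2) by apply pow2_ge_0.
  assert (He2 : 0 < eps^2) by (apply pow_lt; lra).
  unfold H2norm. apply sqrt_le_1_alt. fold Hs.
  apply (Rmult_le_reg_l (C1 * eps^2)); [apply Rmult_lt_0_compat; lra|].
  replace (C1 * eps ^ 2 * (2 * (C0 + L ^ 2) / (C1 * eps ^ 2))) with (2 * (C0 + L^2)) by (field; lra).
  lra.
Qed.
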